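(* Let $p\in[1,\infty)$, $w$ a weight sequence, and let $A\subset L_{p,w}$ be such that for every $\varepsilon>0$ there is $n\in\mathbb{N}$ with $\|a\|_{p,w}^p-S_n(a)<\varepsilon$ for all $a\in A$; for $\varepsilon>0$ let $n(\varepsilon)$ denote the least such $n$. If there exists $m\in\mathbb{N}$ such that $n(\varepsilon)\le m$ for all $\varepsilon>0$, then $A-A=\{a-b:a,b\in A\}$ is equinormed with respect to $\{\|\cdot\|_{p,w,i}\}_{i\in\mathbb{N}}$.
   Context: A weight sequence is a sequence $w=(w_i)$ of positive reals with $w_1=1\ge w_2\ge\dots$, $w_i\to0$, and $\sum_i w_i=+\infty$. For a real sequence $a$, $\|a\|_{p,w}=\sup_{\sigma}\big(\sum_{i=1}^\infty |a_{\sigma_i}|^p w_i\big)^{1/p}$ over all permutations $\sigma$ of $\mathbb{N}$, and $L_{p,w}$ is the set of real sequences with finite $\|\cdot\|_{p,w}$. For $i\in\mathbb{N}$, $\|a\|_{p,w,i}=\|(a_1,\dots,a_i,0,0,\dots)\|_{p,w}$ and $S_i(a)=\|a\|_{p,w,i}^p$. A set $B\subset L_{p,w}$ is equinormed if $\forall\varepsilon>0\ \exists i\ \forall x\in B:\ \|x\|_{p,w}\le\|x\|_{p,w,i}+\varepsilon$. *)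

(* Defs.v *)
(* Sequences are indexed from 0: a 0 is a_1 of the paper. *)
From mathcomp Require Import all_boot all_order all_algebra.
From mathcomp Require Import all_classical all_reals all_analysis.
Set Implicit Arguments. Unset Strict Implicit. Unset Printing Implicit Defensive.
Import Order.TTheory GRing.Theory Num.Theory.
Local Open Scope ring_scope.
Local Open Scope classical_set_scope.

Definition weight_seq (R : realType) (w : nat -> R) : Prop :=
  [/\ w 0%N = 1,
      (forall i, 0 < w i),
      (forall i, w i.+1 <= w i),
      w n @[n --> \oo] --> (0 : R^o)
    & (\sum_(0 <= i <oo) (w i)%:E = +oo)%E].

Definition lpw_pow (R : realType) (p : R) (w : nat -> R) (a : nat -> R) : \bar R :=
  ereal_sup [set s | exists sigma : nat -> nat, bijective sigma /\
     s = (\sum_(0 <= i <oo) ((`|a (sigma i)| `^ p * w i)%:E))%E].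

Definition lpw_norm (R : realType) (p : R) (w : nat -> R) (a : nat -> R) : \bar R :=
  poweR (lpw_pow p w a) p^-1.

Definition trunc (R : realType) (i : nat) (a : nat -> R) : nat -> R :=
  fun k => if (k < i)%N then a k else 0.

Definition lpw_norm_i (R : realType) (p : R) (w : nat -> R) (i : nat) (a : nat -> R) : \bar R :=
  lpw_norm p w (trunc i a).

Definition S_ (R : realType) (p : R) (w : nat -> R) (i : nat) (a : nat -> R) : \bar R :=
  lpw_pow p w (trunc i a).

Definition in_Lpw (R : realType) (p : R) (w : nat -> R) (a : nat -> R) : Prop :=
  (lpw_pow p w a < +oo)%E.

Definition equinormed (R : realType) (p : R) (w : nat -> R) (B : set (nat -> R)) : Prop :=
  forall eps : R, 0 < eps -> exists i : nat, forall x, B x ->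
    (lpw_norm p w x <= lpw_norm_i p w i x + eps%:E)%E.

Definition diffset (R : realType) (A : set (nat -> R)) : set (nat -> R) :=
  [set x | exists a b, A a /\ A b /\ x = (fun k => a k - b k)].

(* Main.v *)
Require Import Defs.
From mathcomp Require Import all_boot all_order all_algebra.
From mathcomp Require Import all_classical all_reals all_analysis.
Import Order.TTheory GRing.Theory Num.Theory.
Local Open Scope ring_scope.
Local Open Scope classical_set_scope.

Section S.
Variables (R : realType) (p : R) (w : nat -> R).
Hypothesis p0 : 0 <= p.
Hypothesis w0 : forall i, 0 < w i.

Lemma term_ge0 (x : R) i : (0 <= ((`|x| `^ p * w i)%:E))%E.
Proof. by rewrite lee_fin mulr_ge0 ?powR_ge0 ?ltW. Qed.

Lemma pow_mono (b a : nat -> R) : (forall k, `|b k| <= `|a k|) ->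
  (lpw_pow p w b <= lpw_pow p w a)%E.
Proof.
move=> ba; apply/ereal_supP => y [s [bs ->]].
apply: le_ereal_sup_tmp; eexists; first by exists s; split; first exact: bs.
apply: lee_nneseries => [i _ _|n _]; first exact: term_ge0.
rewrite lee_fin; apply: ler_wpM2r; first exact: ltW.
by apply: ge0_ler_powR; rewrite ?nnegrE.
Qed.

Lemma pow_ge0 (a : nat -> R) : (0 <= lpw_pow p w a)%E.
Proof.
apply: le_ereal_sup_tmp; eexists; first by exists id; split; first exact: (@inv_bij _ id).
by apply: nneseries_ge0 => n _ _; exact: term_ge0.
Qed.
Hypothesis pn0 : p != 0.
Hypothesis wmon : forall i j, (i <= j)%N -> w j <= w i.

Lemma pigeon (s : nat -> nat) m : injective s -> exists2 j, (j <= m)%N & (m <= s j)%N.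
Proof.
case: m => [|m] inj; first by exists 0%N.
have : ~~ [forall j : 'I_m.+2, s j < m.+1]%N.
  apply/negP => /forallP H.
  have f_inj : injective (fun j : 'I_m.+2 => (inord (s j) : 'I_m.+1)).
    move=> x y /(congr1 val) /=; rewrite !inordK ?H // => /inj /val_inj //.
  by have := leq_card _ f_inj; rewrite !card_ord ltnn.
move/forallPn => [j]; rewrite -leqNgt => hj.
by exists j => //; rewrite -ltnS ltn_ord.
Qed.

Lemma gap_sigma (a : nat -> R) m k0 (s : nat -> nat) : (m <= k0)%N -> bijective s ->
  (\sum_(0 <= i <oo) ((`|trunc m a (s i)| `^ p * w i)%:E)
     + ((`|a k0| `^ p * w m)%:E) <= lpw_pow p w a)%E.
Proof.
move=> mk0 bs.
have [j jm sj] := @pigeon s m (bij_inj bs).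
case: bs => g sg gs.
set l := g k0.
pose t := fun i => if i == j then l else if i == l then j else i.
have tt : cancel t t.
  move=> i; rewrite /t; case: (eqVneq i j) => [->|ij].
    by rewrite eqxx; case: (eqVneq l j) => [->|] //; rewrite eqxx.
  case: (eqVneq i l) => [->|il]; first by rewrite eqxx.
  by rewrite (negbTE ij) (negbTE il).
apply: le_ereal_sup_tmp.
exists (\sum_(0 <= i <oo) ((`|a ((s \o t) i)| `^ p * w i)%:E))%E.
  exists (s \o t); split => //.
  exact: (bij_comp (Bijective sg gs) (Bijective tt tt)).
pose h := fun i => if i == j then ((`|a k0| `^ p * w m)%:E) else 0%E.
have h0 : forall i, (0 <= h i)%E.
  by move=> i; rewrite /h; case: ifP => // _; rewrite lee_fin mulr_ge0 ?powR_ge0 ?ltW.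
apply: (@le_trans _ _ (\sum_(0 <= i <oo) (((`|trunc m a (s i)| `^ p * w i)%:E) + h i))%E).
  rewrite nneseriesD; last 2 first.
  - by move=> *; exact: term_ge0.
  - by move=> *; exact: h0.
  apply: leeD => //.
  apply: le_trans (nneseries_lim_ge j.+1 _); last by move=> *; exact: h0.
  rewrite big_nat_recr //= big1_seq ?add0e /h ?eqxx //.
  move=> i; rewrite mem_index_iota => /andP[_ ij].
  by rewrite (ltn_eqF ij).
apply: lee_nneseries => [i _ _|i _].
  by rewrite adde_ge0 ?h0 ?term_ge0.
rewrite /h /t /=; case: (eqVneq i j) => [->|ij].
  rewrite /trunc ltnNge sj /= normr0 powR0 // mul0r add0e /l gs lee_fin.
  by apply: ler_wpM2l; [exact: powR_ge0 | exact: wmon].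
rewrite adde0; case: (eqVneq i l) => [->|il].
  rewrite /l gs /trunc ltnNge mk0 /= normr0 powR0 // mul0r; exact: term_ge0.
rewrite lee_fin; apply: ler_wpM2r; first exact: ltW.
apply: ge0_ler_powR; rewrite ?nnegrE //.
by rewrite /trunc; case: ifP; rewrite ?normr0.
Qed.

Lemma gap (a : nat -> R) m k0 : (m <= k0)%N ->
  (S_ p w m a + ((`|a k0| `^ p * w m)%:E) <= lpw_pow p w a)%E.
Proof.
move=> mk0.
case L: (lpw_pow p w a) => [r| |]; last 2 first.
- exact: leey.
- by have := pow_ge0 a; rewrite L.
rewrite -leeBrDr //; apply/ereal_supP => y [s [bs ->]].
rewrite leeBrDr // -L; exact: gap_sigma.
Qed.
End S.

Theorem mainTheorem8 (R : realType) (p : R) (w : nat -> R) (A : set (nat -> R)) :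
  1 <= p ->
  weight_seq w ->
  (forall a, A a -> in_Lpw p w a) ->
  (* for every eps > 0 there is n with ||a||^p - S_n(a) < eps for all a in A *)
  (forall eps : R, 0 < eps -> exists n : nat, forall a, A a ->
     (lpw_pow p w a - S_ p w n a < eps%:E)%E) ->
  (* the least such n, n(eps), is bounded by some m uniformly in eps *)
  (exists m : nat, forall eps : R, 0 < eps -> forall n : nat,
     (forall a, A a -> (lpw_pow p w a - S_ p w n a < eps%:E)%E) ->
     (forall k : nat, (forall a, A a -> (lpw_pow p w a - S_ p w k a < eps%:E)%E) ->
        (n <= k)%N) ->
     (n <= m)%N) ->
  equinormed p w (diffset A).
Proof.
move=> p1 [_ w0 wS _ _] Lp H4 [m Hm].
have p0 : 0 <= p by apply: le_trans p1.
have pn0 : p != 0 by rewrite gt_eqF // (lt_le_trans ltr01 p1).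
have wmon : forall i j, (i <= j)%N -> w j <= w i.
  move=> i j /subnKC <-; elim: (j - i)%N => [|k IH]; first by rewrite addn0.
  by rewrite addnS; apply: le_trans (wS _) IH.
have supp : forall a, A a -> forall k, (m <= k)%N -> a k = 0.
  move=> a Aa k mk; case: (eqVneq (a k) 0) => // ak; exfalso.
  set c := `|a k| `^ p * w m.
  have c0 : 0 < c by rewrite mulr_gt0 // powR_gt0 // normr_gt0.
  pose P := fun n => `[< forall b, A b -> (lpw_pow p w b - S_ p w n b < c%:E)%E >].
  have exP : exists n, P n.
    by have [n Hn] := H4 c c0; exists n; apply/asboolP.
  case: (ex_minnP exP) => n /asboolP Pn minn.
  have nm : (n <= m)%N.
    apply: (Hm c c0 n Pn) => k1 Pk; apply: minn; exact/asboolP.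
  have Smn : (S_ p w n a <= S_ p w m a)%E.
    apply: pow_mono => // i; rewrite /trunc; case: ifP => [im|_].
      by rewrite (leq_trans im nm).
    by rewrite normr0.
  have h1 : (lpw_pow p w a - S_ p w m a < c%:E)%E.
    apply: le_lt_trans (Pn a Aa); exact: leeB.
  have h2 := @gap R p w p0 w0 pn0 wmon a m k mk.
  have Sfin : S_ p w m a \is a fin_num.
    rewrite ge0_fin_numE; last exact: pow_ge0.
    apply: le_lt_trans (Lp a Aa); apply: pow_mono => // i.
    by rewrite /trunc; case: ifP; rewrite ?normr0.
  move: h1; rewrite lteBlDr // addeC => h1.
  by have := lt_le_trans h1 h2; rewrite ltxx.
move=> eps eps0; exists m => x [a [b [Aa [Ab ->]]]].
rewrite /lpw_norm_i.
have -> : trunc m (fun k => a k - b k) = (fun k => a k - b k).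
  apply: funext => k; rewrite /trunc; case: ifP => // /negbT; rewrite -leqNgt => mk.
  by rewrite (supp a Aa k mk) (supp b Ab k mk) subrr.
by apply: leeDl; rewrite lee_fin ltW.
Qed.
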